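(* Assume (A1)–(A4) and let $b\in\mathcal H$ be arbitrary. Let $E_k=\rho_1\|r_k\|^2+\rho_2\|s_k\|^2+\rho_2\|y_k-y_{k-1}\|^2$ for $k\ge1$. Then for all $k\ge1$, $$E_{k+1}-E_k\le-\rho_1\|r_{k+1}-r_k\|^2-4c_0\|y_{k+1}-y_k\|^2.$$ In particular $(E_k)$ is monotonically nonincreasing and $\sum_{k=1}^\infty\|y_{k+1}-y_k\|^2<\infty$.
   Context: $\mathcal X,\mathcal Y,\mathcal H$ are real Hilbert spaces. Standing assumptions: (A1) $A:\mathcal X\to\mathcal H$ is bounded linear. (A2) $f:\mathcal Y\to(-\infty,\infty]$ is proper, lower semicontinuous and strongly convex with constant $c_0>0$: $f(ty_1+(1-t)y_2)+c_0t(1-t)\|y_1-y_2\|^2\le tf(y_1)+(1-t)f(y_2)$ for all $y_1,y_2$, $t\in[0,1]$. (A3) $W:\mathscr D(W)\subset\mathcal X\to\mathcal Y$ is a densely defined closed linear operator. (A4) There is $c_1>0$ with $\|Ax\|^2+\|Wx\|^2\ge c_1\|x\|^2$ for all $x\in\mathscr D(W)$. ADMM: fix $\rho_1,\rho_2>0$ and initial $y_0\in\mathcal Y$, $\lambda_0\in\mathcal H$, $\mu_0\in\mathcal Y$. For $k=0,1,\dots$: $x_{k+1}=\arg\min_{x\in\mathscr D(W)}\{\langle\lambda_k,Ax\rangle+\langle\mu_k,Wx\rangle+\frac{\rho_1}{2}\|Ax-b\|^2+\frac{\rho_2}{2}\|Wx-y_k\|^2\}$, $y_{k+1}=\arg\min_{y\in\mathcal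 Y}\{f(y)-\langle\mu_k,y\rangle+\frac{\rho_2}{2}\|Wx_{k+1}-y\|^2\}$, $\lambda_{k+1}=\lambda_k+\rho_1(Ax_{k+1}-b)$, $\mu_{k+1}=\mu_k+\rho_2(Wx_{k+1}-y_{k+1})$. (Under (A1)–(A4) these minimizers exist and are unique.) Residuals: $r_k=Ax_k-b$, $s_k=Wx_k-y_k$ for $k\ge1$. *)

(* Defs.v *)
From Stdlib Require Import Reals Lra.
Open Scope R_scope.

Record Hilbert : Type := MkHilbert {
  car :> Type;
  hzero : car;
  hadd : car -> car -> car;
  hopp : car -> car;
  hscal : R -> car -> car;
  hinner : car -> car -> R;
  hadd_assoc : forall x y z, hadd x (hadd y z) = hadd (hadd x y) z;
  hadd_comm : forall x y, hadd x y = hadd y x;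
  hadd_zero : forall x, hadd x hzero = x;
  hadd_opp : forall x, hadd x (hopp x) = hzero;
  hscal_assoc : forall a b x, hscal a (hscal b x) = hscal (a * b) x;
  hscal_one : forall x, hscal 1 x = x;
  hscal_distr_v : forall a x y, hscal a (hadd x y) = hadd (hscal a x) (hscal a y);
  hscal_distr_s : forall a b x, hscal (a + b) x = hadd (hscal a x) (hscal b x);
  hinner_sym : forall x y, hinner x y = hinner y x;
  hinner_add_l : forall x y z, hinner (hadd x y) z = hinner x z + hinner y z;
  hinner_scal_l : forall a x y, hinner (hscal a x) y = a * hinner x y;
  hinner_pos : forall x, 0 <= hinner x x;
  hinner_def : forall x, hinner x x = 0 -> x = hzero;
  hcomplete : forall u : nat -> car,
    (forall eps, 0 < eps -> exists N, forall m n, (N <= m)%nat -> (N <= n)%nat ->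
        sqrt (hinner (hadd (u m) (hopp (u n))) (hadd (u m) (hopp (u n)))) < eps) ->
    exists l, forall eps, 0 < eps -> exists N, forall n, (N <= n)%nat ->
        sqrt (hinner (hadd (u n) (hopp l)) (hadd (u n) (hopp l))) < eps
}.

Arguments hzero {h}.
Arguments hadd {h}.
Arguments hopp {h}.
Arguments hscal {h}.
Arguments hinner {h}.

Definition vsub {H : Hilbert} (x y : H) : H := hadd x (hopp y).
Definition norm {H : Hilbert} (x : H) : R := sqrt (hinner x x).

Definition vconv {H : Hilbert} (u : nat -> H) (l : H) : Prop :=
  forall eps, 0 < eps -> exists N, forall n, (N <= n)%nat -> norm (vsub (u n) l) < eps.

Definition bounded_linear {X Y : Hilbert} (A : X -> Y) : Prop :=
  (forall x y, A (hadd x y) = hadd (A x) (A y)) /\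
  (forall a x, A (hscal a x) = hscal a (A x)) /\
  (exists C, forall x, norm (A x) <= C * norm x).

(** Linear operator W with domain D (a linear subspace); values of W
    outside D are irrelevant. *)
Definition linear_on {X Y : Hilbert} (D : X -> Prop) (W : X -> Y) : Prop :=
  D hzero /\
  (forall x y, D x -> D y -> D (hadd x y)) /\
  (forall a x, D x -> D (hscal a x)) /\
  (forall x y, D x -> D y -> W (hadd x y) = hadd (W x) (W y)) /\
  (forall a x, D x -> W (hscal a x) = hscal a (W x)).

Definition densely_defined {X : Hilbert} (D : X -> Prop) : Prop :=
  forall x eps, 0 < eps -> exists z, D z /\ norm (vsub x z) < eps.

Definition closed_op {X Y : Hilbert} (D : X -> Prop) (W : X -> Y) : Prop :=
  forall (u : nat -> X) x y, (forall n, D (u n)) -> vconv u x ->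
    vconv (fun n => W (u n)) y -> D x /\ W x = y.

(** Extended reals (-oo, +oo]: [None] is +oo. *)
Definition ER := option R.

Definition ER_le (e1 e2 : ER) : Prop :=
  match e1, e2 with
  | _, None => True
  | None, Some _ => False
  | Some a, Some b => a <= b
  end.

Definition ER_gt (e : ER) (c : R) : Prop :=
  match e with None => True | Some a => c < a end.

Definition ER_plus (e : ER) (r : R) : ER := option_map (fun a => a + r) e.

Definition proper {Y : Hilbert} (f : Y -> ER) : Prop := exists y, f y <> None.

Definition lsc {Y : Hilbert} (f : Y -> ER) : Prop :=
  forall y c, ER_gt (f y) c ->
    exists delta, 0 < delta /\ forall z, norm (vsub z y) < delta -> ER_gt (f z) c.

(** Strong convexity with constant c0 (the inequality is trivial when its
    right-hand side is +oo, i.e. when f y1 or f y2 is +oo; for t = 0 or 1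
    it is trivial too, so only the finite case needs to be stated). *)
Definition strongly_convex {Y : Hilbert} (f : Y -> ER) (c0 : R) : Prop :=
  forall y1 y2 t a1 a2, 0 <= t <= 1 -> f y1 = Some a1 -> f y2 = Some a2 ->
    ER_le (ER_plus (f (hadd (hscal t y1) (hscal (1 - t) y2)))
                   (c0 * t * (1 - t) * (norm (vsub y1 y2)) ^ 2))
          (Some (t * a1 + (1 - t) * a2)).

Definition admm_xobj {X Y H : Hilbert} (A : X -> H) (W : X -> Y) (b : H)
  (rho1 rho2 : R) (lam : H) (mu : Y) (yk : Y) (x : X) : R :=
  hinner lam (A x) + hinner mu (W x)
  + rho1 / 2 * (norm (vsub (A x) b)) ^ 2 + rho2 / 2 * (norm (vsub (W x) yk)) ^ 2.

Definition admm_yobj {Y : Hilbert} (f : Y -> ER) (rho2 : R) (mu : Y) (Wx : Y) (y : Y) : ER :=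
  ER_plus (f y) (- hinner mu y + rho2 / 2 * (norm (vsub Wx y)) ^ 2).

(** The sequences x, y, lam, mu are ADMM iterates (x 0 is unused; y 0,
    lam 0, mu 0 are the initial values). Since the minimizers are unique,
    this characterises the ADMM sequence. *)
Definition is_admm {X Y H : Hilbert} (A : X -> H) (D : X -> Prop) (W : X -> Y)
  (f : Y -> ER) (b : H) (rho1 rho2 : R)
  (x : nat -> X) (y : nat -> Y) (lam : nat -> H) (mu : nat -> Y) : Prop :=
  forall k,
    (D (x (S k)) /\
     forall z, D z -> admm_xobj A W b rho1 rho2 (lam k) (mu k) (y k) (x (S k))
                      <= admm_xobj A W b rho1 rho2 (lam k) (mu k) (y k) z) /\
    (forall z, ER_le (admm_yobj f rho2 (mu k) (W (x (S k))) (y (S k)))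
                     (admm_yobj f rho2 (mu k) (W (x (S k))) z)) /\
    lam (S k) = hadd (lam k) (hscal rho1 (vsub (A (x (S k))) b)) /\
    mu (S k) = hadd (mu k) (hscal rho2 (vsub (W (x (S k))) (y (S k)))).

(* Main.v *)
Require Import Defs.
From Stdlib Require Import Reals Lra Lia.
Open Scope R_scope.

Section V.
Context {V : Hilbert}.
Lemma hscal_zero (x : V) : hscal 0 x = hzero.
Proof.
  assert (E : hscal 0 x = hadd (hscal 0 x) (hscal 0 x)).
  { rewrite <- hscal_distr_s. f_equal. ring. }
  set (z := hscal 0 x) in *.
  transitivity (hadd (hadd z z) (hopp z)).
  - rewrite <- hadd_assoc, hadd_opp, hadd_zero. reflexivity.
  - rewrite <- E. apply (hadd_opp _).
Qed.
Lemma hopp_scal (x : V) : hopp x = hscal (-1) x.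
Proof.
  set (y := hscal (-1) x).
  assert (E : hadd x y = hzero).
  { unfold y. rewrite <- (hscal_one _ x) at 1. rewrite <- hscal_distr_s.
    replace (1 + -1) with 0 by ring. apply hscal_zero. }
  transitivity (hadd (hadd x y) (hopp x)).
  - rewrite E, hadd_comm, hadd_zero. reflexivity.
  - rewrite (hadd_comm _ x y), <- hadd_assoc, hadd_opp, hadd_zero. reflexivity.
Qed.
Lemma in_addl (x y z : V) : hinner (hadd x y) z = hinner x z + hinner y z.
Proof. apply hinner_add_l. Qed.
Lemma in_addr (x y z : V) : hinner z (hadd x y) = hinner z x + hinner z y.
Proof. rewrite hinner_sym, hinner_add_l, (hinner_sym _ x), (hinner_sym _ y). reflexivity. Qed.
Lemma in_scall a (x y : V) : hinner (hscal a x) y = a * hinner x y.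
Proof. apply hinner_scal_l. Qed.
Lemma in_scalr a (x y : V) : hinner y (hscal a x) = a * hinner y x.
Proof. rewrite hinner_sym, hinner_scal_l, hinner_sym. reflexivity. Qed.
Lemma in_oppl (x y : V) : hinner (hopp x) y = - hinner x y.
Proof. rewrite hopp_scal, in_scall. ring. Qed.
Lemma in_oppr (x y : V) : hinner y (hopp x) = - hinner y x.
Proof. rewrite hopp_scal, in_scalr. ring. Qed.
Lemma in_sub_l (x y z : V) : hinner (vsub x y) z = hinner x z - hinner y z.
Proof. unfold vsub. rewrite in_addl, in_oppl. ring. Qed.
Lemma in_sub_r (x y z : V) : hinner z (vsub x y) = hinner z x - hinner z y.
Proof. unfold vsub. rewrite in_addr, in_oppr. ring. Qed.
Lemma norm2 (x : V) : norm x ^ 2 = hinner x x.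
Proof. unfold norm. rewrite <- Rsqr_pow2. apply Rsqr_sqrt, hinner_pos. Qed.
End V.

#[global] Hint Rewrite @in_addl @in_addr @in_scall @in_scalr @in_oppl @in_oppr
  @in_sub_l @in_sub_r @norm2 : hin.

Lemma lin_sub {X Y : Hilbert} (A : X -> Y) : bounded_linear A ->
  forall u v, A (vsub u v) = vsub (A u) (A v).
Proof.
  intros [H1 [H2 _]] u v. unfold vsub. rewrite H1, !hopp_scal, H2. reflexivity.
Qed.
Lemma D_sub {X Y : Hilbert} (D : X -> Prop) (W : X -> Y) : linear_on D W ->
  forall u v, D u -> D v -> D (vsub u v) /\ W (vsub u v) = vsub (W u) (W v).
Proof.
  intros [_ [H1 [H2 [H3 H4]]]] u v Du Dv. unfold vsub. rewrite !hopp_scal. split.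
  - apply H1; auto.
  - rewrite H3, H4; auto.
Qed.

Lemma quad0 G Q : 0 <= Q -> (forall t, 0 <= t*G + t*t*Q) -> G = 0.
Proof.
  intros HQ Ht. specialize (Ht (- G / (Q+1))).
  assert (E : - G / (Q+1) * G + - G / (Q+1) * (- G / (Q+1)) * Q = - (G*G) / ((Q+1)*(Q+1))).
  { field. lra. }
  rewrite E in Ht.
  assert (0 <= - (G*G)) .
  { replace (- (G*G)) with (- (G*G) / ((Q+1)*(Q+1)) * ((Q+1)*(Q+1))) by (field; lra).
    apply Rmult_le_pos; nra. }
  nra.
Qed.

Lemma lin0 P K : 0 <= K -> (forall t, 0 < t <= 1 -> t*P <= t*t*K) -> P <= 0.
Proof.
  intros HK Ht. destruct (Rle_lt_dec P 0) as [h|h]; auto.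
  specialize (Ht (P / (P+K))).
  assert (0 < P / (P+K) <= 1).
  { split. apply Rdiv_lt_0_compat; lra.
    apply (Rmult_le_reg_r (P+K)); [lra|]. field_simplify; lra. }
  specialize (Ht H).
  assert (P <= P/(P+K) * K).
  { apply (Rmult_le_reg_l (P/(P+K))); lra. }
  assert (P/(P+K)*K*(P+K) = P*K) by (field; lra).
  nra.
Qed.

Ltac sym2 a b := try rewrite (hinner_sym _ b a) in *.
Ltac canon4 a b c d := sym2 a b; sym2 a c; sym2 a d; sym2 b c; sym2 b d; sym2 c d.

Lemma xopt (X Y H : Hilbert) (A : X -> H) (D : X -> Prop) (W : X -> Y)
  (f : Y -> ER) (b : H) (rho1 rho2 : R)
  (x : nat -> X) (y : nat -> Y) (lam : nat -> H) (mu : nat -> Y)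
  (HA1 : bounded_linear A) (HA3_lin : linear_on D W)
  (Hrho1 : 0 < rho1) (Hrho2 : 0 < rho2)
  (Hadmm : is_admm A D W f b rho1 rho2 x y lam mu) k d (Dd : D d) :
  hinner (lam k) (A d) + hinner (mu k) (W d)
  + rho1 * hinner (vsub (A (x (S k))) b) (A d)
  + rho2 * hinner (vsub (W (x (S k))) (y k)) (W d) = 0.
Proof.
  destruct (Hadmm k) as [[Dx Hmin] _].
  apply quad0 with (Q := rho1/2*hinner (A d) (A d) + rho2/2 * hinner (W d) (W d)).
  { pose proof (hinner_pos _ (A d)); pose proof (hinner_pos _ (W d)).
    assert (0 <= rho1/2*hinner (A d) (A d)) by (apply Rmult_le_pos; lra).
    assert (0 <= rho2/2*hinner (W d) (W d)) by (apply Rmult_le_pos; lra). lra. }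
  intro t. specialize (Hmin (hadd (x (S k)) (hscal t d))).
  destruct HA3_lin as [_ [Hadd [Hsc [HWadd HWsc]]]].
  destruct HA1 as [HAadd [HAsc _]].
  assert (Dt : D (hscal t d)) by auto.
  specialize (Hmin (Hadd _ _ Dx Dt)).
  unfold admm_xobj in Hmin.
  rewrite HWadd, HWsc, HAadd, HAsc in Hmin; auto.
  autorewrite with hin in *.
  canon4 (lam k) (A (x (S k))) (A d) b.
  canon4 (mu k) (W (x (S k))) (W d) (y k).
  nra.
Qed.

Lemma ysub (X Y H : Hilbert) (A : X -> H) (D : X -> Prop) (W : X -> Y)
  (f : Y -> ER) (c0 : R) (b : H) (rho1 rho2 : R)
  (x : nat -> X) (y : nat -> Y) (lam : nat -> H) (mu : nat -> Y)
  (HA2_proper : proper f) (Hc0 : 0 < c0)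
  (HA2_sc : strongly_convex f c0)
  (Hrho1 : 0 < rho1) (Hrho2 : 0 < rho2)
  (Hadmm : is_admm A D W f b rho1 rho2 x y lam mu) k :
  exists a, f (y (S k)) = Some a /\ forall z c, f z = Some c ->
   a + hinner (mu (S k)) (vsub z (y (S k)))
     + c0 * hinner (vsub z (y (S k))) (vsub z (y (S k))) <= c.
Proof.
  destruct (Hadmm k) as [_ [Hy [_ Hmu]]].
  destruct HA2_proper as [y0 Hy0]. destruct (f y0) eqn:E0; [|congruence].
  pose proof (Hy y0) as H0. unfold admm_yobj, ER_plus, ER_le in H0. rewrite E0 in H0.
  destruct (f (y (S k))) as [a|] eqn:Ea; [|simpl in H0; contradiction].
  exists a. split; auto. intros z c Hz.
  assert (HN := hinner_pos _ (vsub z (y (S k)))).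
  assert (P0 : a + hinner (mu (S k)) (vsub z (y (S k)))
     + c0 * hinner (vsub z (y (S k))) (vsub z (y (S k))) - c <= 0).
  2: lra.
  apply lin0 with (K := (c0 + rho2/2) * hinner (vsub z (y (S k))) (vsub z (y (S k)))).
  { apply Rmult_le_pos; lra. }
  intros t Ht.
  pose proof (HA2_sc z (y (S k)) t c a ltac:(lra) Hz Ea) as Hsc.
  destruct (f (hadd (hscal t z) (hscal (1 - t) (y (S k))))) as [ft|] eqn:Et;
    [|cbv [ER_le ER_plus option_map] in Hsc; contradiction].
  cbv [ER_le ER_plus option_map] in Hsc.
  pose proof (Hy (hadd (hscal t z) (hscal (1 - t) (y (S k))))) as H1.
  unfold admm_yobj, ER_plus, ER_le in H1. rewrite Ea, Et in H1. cbv [option_map] in H1.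
  rewrite Hmu.
  autorewrite with hin in *.
  canon4 (mu k) (W (x (S k))) z (y (S k)).
  nra.
Qed.

Ltac canon6 a b c d e g :=
  sym2 a b; sym2 a c; sym2 a d; sym2 a e; sym2 a g;
  sym2 b c; sym2 b d; sym2 b e; sym2 b g;
  sym2 c d; sym2 c e; sym2 c g; sym2 d e; sym2 d g; sym2 e g.

Theorem lemma2p4 (X Y H : Hilbert) (A : X -> H) (D : X -> Prop) (W : X -> Y)
  (f : Y -> ER) (c0 c1 : R) (b : H) (rho1 rho2 : R)
  (x : nat -> X) (y : nat -> Y) (lam : nat -> H) (mu : nat -> Y)
  (HA1 : bounded_linear A)
  (HA2_proper : proper f) (HA2_lsc : lsc f) (Hc0 : 0 < c0)
  (HA2_sc : strongly_convex f c0)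
  (HA3_lin : linear_on D W) (HA3_dense : densely_defined D)
  (HA3_closed : closed_op D W)
  (Hc1 : 0 < c1)
  (HA4 : forall z, D z -> (norm (A z)) ^ 2 + (norm (W z)) ^ 2 >= c1 * (norm z) ^ 2)
  (Hrho1 : 0 < rho1) (Hrho2 : 0 < rho2)
  (Hadmm : is_admm A D W f b rho1 rho2 x y lam mu) :
  let r := fun k => vsub (A (x k)) b in
  let s := fun k => vsub (W (x k)) (y k) in
  let E := fun k => rho1 * (norm (r k)) ^ 2 + rho2 * (norm (s k)) ^ 2
                    + rho2 * (norm (vsub (y k) (y (k - 1)%nat))) ^ 2 in
  (forall k, (1 <= k)%nat ->
     E (S k) - E k <= - rho1 * (norm (vsub (r (S k)) (r k))) ^ 2
                      - 4 * c0 * (norm (vsub (y (S k)) (y k))) ^ 2) /\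
  (forall k, (1 <= k)%nat -> E (S k) <= E k) /\
  (exists l, Un_cv (fun n => sum_f_R0 (fun i => (norm (vsub (y (i + 2)%nat) (y (i + 1)%nat))) ^ 2) n) l).
Proof.
  intros r s E.
  assert (P1 : forall k, (1 <= k)%nat ->
     E (S k) - E k <= - rho1 * (norm (vsub (r (S k)) (r k))) ^ 2
                      - 4 * c0 * (norm (vsub (y (S k)) (y k))) ^ 2).
  { intros k Hk. destruct k as [|k']; [lia|].
    subst E r s. cbv beta.
    replace (S (S k') - 1)%nat with (S k') by lia.
    replace (S k' - 1)%nat with k' by lia.
    destruct (Hadmm k') as [[Dx1 _] [_ [Hl0 Hm0]]].
    destruct (Hadmm (S k')) as [[Dx2 _] [_ [Hl1 Hm1]]].
    destruct (D_sub D W HA3_lin _ _ Dx2 Dx1) as [Dd HWd].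
    pose proof (xopt X Y H A D W f b rho1 rho2 x y lam mu HA1 HA3_lin Hrho1 Hrho2 Hadmm
      (S k') _ Dd) as G1.
    pose proof (xopt X Y H A D W f b rho1 rho2 x y lam mu HA1 HA3_lin Hrho1 Hrho2 Hadmm
      k' _ Dd) as G0.
    rewrite (lin_sub A HA1), HWd in G0, G1.
    rewrite Hl0, Hm0 in G1.
    destruct (ysub X Y H A D W f c0 b rho1 rho2 x y lam mu HA2_proper Hc0 HA2_sc
      Hrho1 Hrho2 Hadmm k') as [a1 [Ea1 Hs1]].
    destruct (ysub X Y H A D W f c0 b rho1 rho2 x y lam mu HA2_proper Hc0 HA2_sc
      Hrho1 Hrho2 Hadmm (S k')) as [a2 [Ea2 Hs2]].
    specialize (Hs1 _ _ Ea2). specialize (Hs2 _ _ Ea1).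
    rewrite Hm1 in Hs2. rewrite Hm0 in Hs2, Hs1.
    assert (N1 : 0 <= rho2 * hinner
      (vsub (vsub (W (x (S (S k')))) (W (x (S k')))) (vsub (y (S k')) (y k')))
      (vsub (vsub (W (x (S (S k')))) (W (x (S k')))) (vsub (y (S k')) (y k')))).
    { apply Rmult_le_pos; [lra | apply hinner_pos]. }
    clear Hadmm Hl1 Hm1 HA4.
    autorewrite with hin in *.
    canon4 (lam k') (A (x (S k'))) (A (x (S (S k')))) b.
    canon6 (mu k') (W (x (S k'))) (W (x (S (S k')))) (y k') (y (S k')) (y (S (S k'))).
    lra. }
  assert (Enn : forall k, 0 <= E k).
  { intro k. subst E. cbv beta.
    pose proof (pow2_ge_0 (norm (r k))). pose proof (pow2_ge_0 (norm (s k))).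
    pose proof (pow2_ge_0 (norm (vsub (y k) (y (k - 1)%nat)))).
    assert (0 <= rho1 * norm (r k) ^ 2) by (apply Rmult_le_pos; lra).
    assert (0 <= rho2 * norm (s k) ^ 2) by (apply Rmult_le_pos; lra).
    assert (0 <= rho2 * norm (vsub (y k) (y (k - 1)%nat)) ^ 2) by (apply Rmult_le_pos; lra).
    lra. }
  assert (P2 : forall k, (1 <= k)%nat -> E (S k) <= E k).
  { intros k Hk. specialize (P1 k Hk).
    pose proof (pow2_ge_0 (norm (vsub (r (S k)) (r k)))).
    pose proof (pow2_ge_0 (norm (vsub (y (S k)) (y k)))).
    assert (0 <= rho1 * norm (vsub (r (S k)) (r k)) ^ 2) by (apply Rmult_le_pos; lra).
    assert (0 <= 4 * c0 * norm (vsub (y (S k)) (y k)) ^ 2)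
      by (apply Rmult_le_pos; [lra|assumption]).
    lra. }
  split; [exact P1|]. split; [exact P2|].
  set (u := fun n => sum_f_R0 (fun i => (norm (vsub (y (i + 2)%nat) (y (i + 1)%nat))) ^ 2) n).
  assert (Hb : forall n, 4 * c0 * u n <= E 1%nat - E (n + 2)%nat).
  { induction n as [|n IH].
    - unfold u; simpl sum_f_R0. specialize (P1 1%nat (le_n _)).
      pose proof (pow2_ge_0 (norm (vsub (r 2%nat) (r 1%nat)))).
      assert (0 <= rho1 * norm (vsub (r 2%nat) (r 1%nat)) ^ 2) by (apply Rmult_le_pos; lra).
      simpl (0+2)%nat; simpl (0+1)%nat. lra.
    - unfold u in *; rewrite tech5; cbv beta.
      specialize (P1 (n + 2)%nat ltac:(lia)).
      replace (S n + 2)%nat with (S (n + 2)) by lia.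
      replace (S n + 1)%nat with (n + 2)%nat by lia.
      pose proof (pow2_ge_0 (norm (vsub (r (S (n+2))) (r (n+2)%nat)))).
      assert (0 <= rho1 * norm (vsub (r (S (n+2))) (r (n+2)%nat)) ^ 2)
        by (apply Rmult_le_pos; lra).
      lra. }
  destruct (growing_cv u) as [l Hl].
  - intro n. unfold u. rewrite tech5.
    pose proof (pow2_ge_0 (norm (vsub (y (S n + 2)%nat) (y (S n + 1)%nat)))). lra.
  - exists (E 1%nat / (4 * c0)). intros v [n ->].
    specialize (Hb n). pose proof (Enn (n+2)%nat).
    apply (Rmult_le_reg_l (4 * c0)); [lra|]. field_simplify; lra.
  - exists l. exact Hl.
Qed.
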